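(* A quadratic vector field $v=P\,\partial_x+Q\,\partial_y$ on $\mathbb{C}^2$ with four distinct non-degenerate singular points is Hamiltonian if and only if $\operatorname{tr}Dv(p)=0$ at every singular point $p$. Consequently, the space $\mathcal{H}_2$ of quadratic Hamiltonian vector fields has dimension $9$.
   Context: $v$ is Hamiltonian if $v=H_y\,\partial_x-H_x\,\partial_y$ for some polynomial $H$, equivalently (on $\mathbb{C}^2$) if $P_x+Q_y\equiv0$. $Dv$ is the Jacobian matrix of $(P,Q)$. A singular point $p$ is non-degenerate if $\det Dv(p)\ne0$. The space of quadratic vector fields has dimension 12. *)

(* Defs.v *)
From HB Require Import structures.
From mathcomp Require Import all_boot all_order all_algebra.
Set Implicit Arguments. Unset Strict Implicit. Unset Printing Implicit Defensive.
Import Order.TTheory GRing.Theory Num.Theory.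
Local Open Scope ring_scope.

(* A quadratic vector field v = P d/dx + Q d/dy (deg P, deg Q <= 2) is encoded
   by its 12 coefficients, a row vector in 'rV[R]_12 (the 12-dimensional space
   of quadratic vector fields).  With monomial order 1, x, y, x^2, xy, y^2:
     P = v_0 + v_1 x + v_2 y + v_3 x^2 + v_4 xy + v_5 y^2
     Q = v_6 + v_7 x + v_8 y + v_9 x^2 + v_10 xy + v_11 y^2 *)

Section QVF.
Variable R : fieldType.

Definition coefP (v : 'rV[R]_12) (k : nat) : R := v ord0 (inord k).
Definition coefQ (v : 'rV[R]_12) (k : nat) : R := v ord0 (inord (6 + k)).

Definition qeval (c : nat -> R) (x y : R) : R :=
  c 0%N + c 1%N * x + c 2%N * y + c 3%N * x ^+ 2 + c 4%N * x * y + c 5%N * y ^+ 2.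
Definition qdx (c : nat -> R) (x y : R) : R :=
  c 1%N + 2%:R * c 3%N * x + c 4%N * y.
Definition qdy (c : nat -> R) (x y : R) : R :=
  c 2%N + c 4%N * x + 2%:R * c 5%N * y.

Definition Dv (v : 'rV[R]_12) (p : R * R) : 'M[R]_2 :=
  \matrix_(i < 2, j < 2)
    if (i == 0 :> nat) then
      (if (j == 0 :> nat) then qdx (coefP v) p.1 p.2 else qdy (coefP v) p.1 p.2)
    else
      (if (j == 0 :> nat) then qdx (coefQ v) p.1 p.2 else qdy (coefQ v) p.1 p.2).

Definition qvf_singular (v : 'rV[R]_12) (p : R * R) : Prop :=
  qeval (coefP v) p.1 p.2 = 0 /\ qeval (coefQ v) p.1 p.2 = 0.

Definition qvf_nondegenerate (v : 'rV[R]_12) (p : R * R) : Prop :=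
  \det (Dv v p) != 0.

Definition qvf_hamiltonian (v : 'rV[R]_12) : Prop :=
  forall x y : R, qdx (coefP v) x y + qdy (coefQ v) x y = 0.

End QVF.

(* Main.v *)
Require Import Defs.
From HB Require Import structures.
From mathcomp Require Import all_boot all_order all_algebra.
From mathcomp Require Import ring.
Import Order.TTheory GRing.Theory Num.Theory.
Set Implicit Arguments. Unset Strict Implicit.
Local Open Scope ring_scope.

Lemma det2 (R : fieldType) (M : 'M[R]_2) : \det M = M 0 0 * M 1 1 - M 0 1 * M 1 0.
Proof.
rewrite (expand_det_row _ ord0) !big_ord_recl big_ord0 /cofactor !det_mx11 !mxE /=.
rewrite addr0 expr0 expr1 mul1r mulN1r.
have -> : lift ord0 ord0 = 1 :> 'I_2 by apply/val_inj.
have -> : lift (1 : 'I_2) ord0 = 0 :> 'I_2 by apply/val_inj.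
by rewrite mulrN.
Qed.

Lemma tr2 (R : fieldType) (M : 'M[R]_2) : \tr M = M 0 0 + M 1 1.
Proof.
rewrite /mxtrace !big_ord_recl big_ord0 addr0.
by have -> : lift ord0 ord0 = 1 :> 'I_2 by apply/val_inj.
Qed.

Lemma line_eq (R : fieldType) (c : nat -> R) (x y e b t : R) :
  qeval c (x - e * t) (y + b * t) =
  qeval c x y + t * (- e * qdx c x y + b * qdy c x y)
  + t ^+ 2 * (c 3%N * e ^+ 2 - c 4%N * e * b + c 5%N * b ^+ 2).
Proof. rewrite /qeval /qdx /qdy; ring. Qed.

Lemma param (R : fieldType) (b e x1 y1 x y : R) :
  (b != 0) || (e != 0) -> b * (x - x1) + e * (y - y1) = 0 ->
  exists t, x = x1 - e * t /\ y = y1 + b * t.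
Proof.
case/orP => nz H.
- exists ((y - y1) / b).
  have Hb : b * ((y - y1) / b) = y - y1 by rewrite mulrC divfK.
  split; last by rewrite Hb; ring.
  apply: (mulfI nz).
  have E : b * x - b * (x1 - e * ((y - y1) / b)) = b * (x - x1) + e * (y - y1).
    have E' : b * x - b * (x1 - e * ((y - y1) / b)) = b * (x - x1) + e * (b * ((y - y1) / b)) by ring.
    by rewrite E' Hb.
  by apply/eqP; rewrite -subr_eq0 E H.
- exists (- ((x - x1) / e)).
  have He : e * ((x - x1) / e) = x - x1 by rewrite mulrC divfK.
  split; first by rewrite mulrN He; ring.
  apply: (mulfI nz).
  have E : e * y - e * (y1 + b * - ((x - x1) / e)) = b * (x - x1) + e * (y - y1).
    have E' : e * y - e * (y1 + b * - ((x - x1) / e)) = b * (e * ((x - x1) / e)) + e * (y - y1) by ring.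
    by rewrite E' He.
  by apply/eqP; rewrite -subr_eq0 E H.
Qed.

Lemma quad_zero (R : fieldType) (t2 t3 be ga : R) :
  t2 != 0 -> t3 != 0 -> t2 != t3 ->
  t2 * be + t2 ^+ 2 * ga = 0 -> t3 * be + t3 ^+ 2 * ga = 0 -> be = 0.
Proof.
move=> n2 n3 n23 h2 h3.
have e2 : be + t2 * ga = 0.
  have : t2 * (be + t2 * ga) = 0 by rewrite -h2; ring.
  by move/eqP; rewrite mulf_eq0 (negbTE n2) => /eqP.
have e3 : be + t3 * ga = 0.
  have : t3 * (be + t3 * ga) = 0 by rewrite -h3; ring.
  by move/eqP; rewrite mulf_eq0 (negbTE n3) => /eqP.
have : (t2 - t3) * ga = 0 by rewrite -[RHS](subrr 0) -{1}e2 -e3; ring.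
move/eqP; rewrite mulf_eq0 subr_eq0 (negbTE n23) /= => /eqP g0.
by move: e2; rewrite g0 mulr0 addr0.
Qed.

Definition Ltr (R : fieldType) (v : 'rV[R]_12) (x y : R) :=
  qdx (coefP v) x y + qdy (coefQ v) x y.

Lemma core (R : fieldType) (v : 'rV[R]_12) x1 y1 x2 y2 x3 y3 :
  (x1, y1) != (x2, y2) -> (x1, y1) != (x3, y3) -> (x2, y2) != (x3, y3) ->
  qvf_singular v (x1, y1) -> qvf_singular v (x2, y2) -> qvf_singular v (x3, y3) ->
  qvf_nondegenerate v (x1, y1) ->
  Ltr v x1 y1 = 0 -> Ltr v x2 y2 = 0 -> Ltr v x3 y3 = 0 ->
  qvf_hamiltonian v.
Proof.
move=> n12 n13 n23 [S1P S1Q] [S2P S2Q] [S3P S3Q] ND L1 L2 L3.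
set P := coefP v in S1P S2P S3P ND *.
set Q := coefQ v in S1Q S2Q S3Q ND *.
rewrite /= in S1P S2P S3P S1Q S2Q S3Q.
set B := 2%:R * P 3%N + Q 4%N.
set Cc := P 4%N + 2%:R * Q 5%N.
have LE : forall x y, Ltr v x y = (P 1%N + Q 2%N) + B * x + Cc * y.
  by move=> x y; rewrite /Ltr -/P -/Q /qdx /qdy /B /Cc; ring.
suff [B0 C0] : B = 0 /\ Cc = 0.
  have A0 : P 1%N + Q 2%N = 0.
    by move: L1; rewrite LE B0 C0 !mul0r !addr0.
  move=> x y; have := LE x y; rewrite /Ltr -/P -/Q => ->.
  by rewrite A0 B0 C0 !mul0r !addr0.
case: (boolP ((B != 0) || (Cc != 0))) => [Hbc|]; last first.
  by rewrite negb_or !negbK => /andP[/eqP -> /eqP ->].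
have h2 : B * (x2 - x1) + Cc * (y2 - y1) = 0.
  have : Ltr v x2 y2 - Ltr v x1 y1 = B * (x2 - x1) + Cc * (y2 - y1).
    by rewrite !LE; ring.
  by rewrite L1 L2 subrr => <-.
have h3 : B * (x3 - x1) + Cc * (y3 - y1) = 0.
  have : Ltr v x3 y3 - Ltr v x1 y1 = B * (x3 - x1) + Cc * (y3 - y1).
    by rewrite !LE; ring.
  by rewrite L1 L3 subrr => <-.
have [t2 [ex2 ey2]] := param Hbc h2.
have [t3 [ex3 ey3]] := param Hbc h3.
subst x2 y2 x3 y3.
have t20 : t2 != 0.
  apply/eqP => t0; move/eqP: n12; apply; by rewrite t0 !mulr0 subr0 addr0.
have t30 : t3 != 0.
  apply/eqP => t0; move/eqP: n13; apply; by rewrite t0 !mulr0 subr0 addr0.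
have t23 : t2 != t3.
  apply/eqP => t0; move/eqP: n23; apply; by rewrite t0.
have bP : - Cc * qdx P x1 y1 + B * qdy P x1 y1 = 0.
  apply: (quad_zero (ga := P 3%N * Cc ^+ 2 - P 4%N * Cc * B + P 5%N * B ^+ 2) t20 t30 t23).
  - by move: S2P; rewrite line_eq S1P add0r.
  - by move: S3P; rewrite line_eq S1P add0r.
have bQ : - Cc * qdx Q x1 y1 + B * qdy Q x1 y1 = 0.
  apply: (quad_zero (ga := Q 3%N * Cc ^+ 2 - Q 4%N * Cc * B + Q 5%N * B ^+ 2) t20 t30 t23).
  - by move: S2Q; rewrite line_eq S1Q add0r.
  - by move: S3Q; rewrite line_eq S1Q add0r.
move: ND; rewrite /qvf_nondegenerate det2 !mxE /= -/P -/Q => ND.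
set d := _ - _ in ND.
have Bd : B * d = 0.
  have : B * d = qdx P x1 y1 * (- Cc * qdx Q x1 y1 + B * qdy Q x1 y1)
                 - (- Cc * qdx P x1 y1 + B * qdy P x1 y1) * qdx Q x1 y1.
    by rewrite /d; ring.
  by rewrite bP bQ mulr0 mul0r subrr.
have Cd : Cc * d = 0.
  have : Cc * d = - (- Cc * qdx P x1 y1 + B * qdy P x1 y1) * qdy Q x1 y1
                 + qdy P x1 y1 * (- Cc * qdx Q x1 y1 + B * qdy Q x1 y1).
    by rewrite /d; ring.
  by rewrite bP bQ mulr0 oppr0 mul0r addr0.
move/eqP: Bd; rewrite mulf_eq0 (negbTE ND) orbF => /eqP ->.
move/eqP: Cd; rewrite mulf_eq0 (negbTE ND) orbF => /eqP ->.
by [].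
Qed.

Section Lin.
Variable R : fieldType.

Definition hamf (v : 'rV[R]_12) : 'rV[R]_3 :=
  \row_(j < 3) (if val j == 0%N then coefP v 1 + coefQ v 2
                else if val j == 1%N then 2%:R * coefP v 3 + coefQ v 4
                else coefP v 4 + 2%:R * coefQ v 5).

Lemma hamf_lin : linear hamf.
Proof.
move=> a u w; apply/rowP => j; rewrite !mxE /coefP /coefQ !mxE.
by case: ifP => _; [|case: ifP => _]; ring.
Qed.

HB.instance Definition _ := GRing.isLinear.Build R 'rV[R]_12 'rV[R]_3 _ hamf hamf_lin.

Lemma hamfP v : qvf_hamiltonian v <-> hamf v = 0.
Proof.
have LE : forall x y, qdx (coefP v) x y + qdy (coefQ v) x y =
   (coefP v 1 + coefQ v 2) + (2%:R * coefP v 3 + coefQ v 4) * x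
   + (coefP v 4 + 2%:R * coefQ v 5) * y.
  by move=> x y; rewrite /qdx /qdy; ring.
split.
- move=> H.
  have A0 := H 0 0; rewrite LE !mulr0 !addr0 in A0.
  have B0 := H 1 0; rewrite LE A0 mulr1 mulr0 add0r addr0 in B0.
  have C0 := H 0 1; rewrite LE A0 mulr1 mulr0 !add0r in C0.
  apply/rowP => j; rewrite !mxE.
  by case: ifP => _; [|case: ifP => _].
- move=> E.
  have A0 := congr1 (fun m : 'rV[R]_3 => m ord0 (@Ordinal 3 0 isT)) E.
  have B0 := congr1 (fun m : 'rV[R]_3 => m ord0 (@Ordinal 3 1 isT)) E.
  have C0 := congr1 (fun m : 'rV[R]_3 => m ord0 (@Ordinal 3 2 isT)) E.
  rewrite /= !mxE /= in A0 B0 C0.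
  by move=> x y; rewrite LE A0 B0 C0 !mul0r !addr0.
Qed.

Definition hamg (w : 'rV[R]_3) : 'rV[R]_12 :=
  \row_(i < 12) (if val i == 1%N then w ord0 (@Ordinal 3 0 isT)
                 else if val i == 10%N then w ord0 (@Ordinal 3 1 isT)
                 else if val i == 4%N then w ord0 (@Ordinal 3 2 isT) else 0).

Lemma hamfg w : hamf (hamg w) = w.
Proof.
have iv : forall k, (k < 12)%N -> val (inord k : 'I_12) = k by move=> k h; exact: inordK.
apply/rowP => j; rewrite !mxE /coefP /coefQ !mxE !iv //=.
case: j => [[|[|[|j]]] Hj] /=.
- by rewrite addr0; congr (w _ _); apply/val_inj.
- by rewrite mulr0 add0r; congr (w _ _); apply/val_inj.
- by rewrite mulr0 addr0; congr (w _ _); apply/val_inj.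
- by [].
Qed.

End Lin.

Theorem mainTheorem5 (C : numClosedFieldType) :
  (forall v : 'rV[C]_12,
     (exists p1 p2 p3 p4 : C * C,
        uniq [:: p1; p2; p3; p4] /\
        (forall p, p \in [:: p1; p2; p3; p4] ->
           qvf_singular v p /\ qvf_nondegenerate v p)) ->
     (qvf_hamiltonian v <->
        (forall p : C * C, qvf_singular v p -> \tr (Dv v p) = 0)))
  /\
  (exists U : {vspace 'rV[C]_12},
     (forall v, v \in U <-> qvf_hamiltonian v) /\ \dim U = 9%N).
Proof.
split.
- move=> v [[x1 y1] [[x2 y2] [[x3 y3] [p4 [Hu Hp]]]]].
  split.
  + by move=> H p _; rewrite tr2 !mxE /=; apply: H.
  + move=> Htr.
    have [S1 N1] := Hp (x1, y1) (mem_head _ _).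
    have m2 : (x2, y2) \in [:: (x1, y1); (x2, y2); (x3, y3); p4].
      by rewrite in_cons mem_head orbT.
    have m3 : (x3, y3) \in [:: (x1, y1); (x2, y2); (x3, y3); p4].
      by rewrite !in_cons eqxx !orbT.
    have [S2 _] := Hp _ m2.
    have [S3 _] := Hp _ m3.
    have Lt : forall p, qvf_singular v p -> Ltr v p.1 p.2 = 0.
      by move=> p /Htr; rewrite tr2 !mxE.
    move: Hu; rewrite /= !inE !negb_or => /andP[/and3P[n12 n13 _] /andP[/andP[n23 _] _]].
    exact: (core n12 n13 n23 S1 S2 S3 N1 (Lt _ S1) (Lt _ S2) (Lt _ S3)).
- exists (lker (linfun (hamf (R:=C)))).
  split.
  + by move=> v; rewrite memv_ker lfunE /= -(rwP eqP); split => /hamfP.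
  + have := limg_ker_dim (linfun (hamf (R:=C))) fullv.
    rewrite capfv dimvf dim_matrix.
    have -> : (linfun (hamf (R:=C)) @: fullv)%VS = fullv.
      apply/eqP; rewrite eqEsubv subvf /=; apply/subvP => w _.
      rewrite -(hamfg w) -(lfunE (hamf (R:=C))).
      exact: memv_img (memvf _).
    rewrite dimvf dim_matrix /=.
    move=> H; apply/eqP; rewrite -(eqn_add2r 3) H //.
Qed.
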